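(* Let $G=(V,E)$ be a graph with $n$ vertices, $m$ edges and maximum degree $\Delta$, and let $c>0$ be the constant determining the threshold $\tau=(c+1)\log n$. The randomized variant of Procedure Edge-Coloring with parameter $h$ satisfying $\log\left(\Delta\cdot\frac{\log\log n}{4\log n}\right)\le h\le\log\Delta-2$ computes a proper $(\Delta+3\cdot2^h)$-edge-coloring of $G$ in $O\left(m\left(\frac{\Delta}{2^h}\right)^{18}+m\cdot h\right)$ time with probability at least $1-\frac{1}{n^c}$.
   Context: Logarithms are base 2. A proper $k$-edge-coloring is a map $\varphi:E\to\{1,\dots,k\}$ with distinct colors on distinct edges sharing an endpoint. A degree-splitting of $H$ with discrepancy $\kappa$ is a partition $(E_1,E_2)$ of $E(H)$ with $|\deg_{E_1}(v)-\deg_{E_2}(v)|\le\kappa$ for all $v$. Procedure Edge-Coloring$(H,h)$: if $h=0$, return a $(\Delta(H)+1)$-edge-coloring of $H$ with palette $\{1,\dots,\Delta(H)+1\}$ computed by a base-case subroutine. Otherwise compute in $O(|E(H)|)$ time a degree-splitting $(E_1,E_2)$ of $H$ with discrepancy at most 2 and $\{|E_1|,|E_2|\}=\{\lfloor |E(H)|/2\rfloor,\lceil |E(H)|/2\rceil\}$; let $H_1=(V(H),E_1)$, $H_2=(V(H),E_2)$ with isolated vertices discarded; compute $\varphi_1=$ Edge-Coloring$(H_1,h-1)$, $\varphi_2=$ Edge-Coloring$(H_2,h-1)$; return $\varphi=\varphi_1$ on $E_1$ and $\varphi=p_1+\varphi_2$ on $E_2$, where $p_1$ is the palette size of $\varphi_1$.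 Randomized variant: in the base case, for an input with $n'$ vertices, $m'$ edges and maximum degree $\Delta'$, if $n'\ge\tau$ a randomized algorithm is used that outputs a proper $(\Delta'+1)$-edge-coloring in $O(\Delta'^{18}n')$ time with probability at least $1-\Delta'^{-n'}$; otherwise a deterministic algorithm is used that outputs a proper $(\Delta'+1)$-edge-coloring in $O(m'\Delta'\log n')$ time. *)

(* Defs.v *)
From HB Require Import structures.
From mathcomp Require Import all_boot all_order all_algebra.
From mathcomp Require Import reals exp.
Set Implicit Arguments. Unset Strict Implicit. Unset Printing Implicit Defensive.
Import Order.TTheory GRing.Theory Num.Theory.
Local Open Scope ring_scope.

Definition log2 {R : realType} (x : R) : R := ln x / ln 2.

Section Graphs.
Variable T : finType.

Definition simple_graph (V : {set T}) (E : {set {set T}}) : bool :=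
  [forall e in E, (#|e| == 2)%N && (e \subset V)].

Definition deg (E : {set {set T}}) (v : T) : nat := #|[set e in E | v \in e]|.

Definition maxdeg (E : {set {set T}}) : nat := (\max_(v : T) deg E v)%N.

Definition proper_col (E : {set {set T}}) (k : nat) (phi : {set T} -> nat) : bool :=
  [forall e in E, (0 < phi e <= k)%N] &&
  [forall e in E, forall f in E,
      ((e != f) && ~~ [disjoint e & f]) ==> (phi e != phi f)].

Definition degree_splitting (E E1 E2 : {set {set T}}) (kappa : nat) : bool :=
  [&& E1 :|: E2 == E, [disjoint E1 & E2] &
      [forall v : T, (deg E1 v <= deg E2 v + kappa)%N &&
                     (deg E2 v <= deg E1 v + kappa)%N]].

Definition balanced_sizes (E E1 E2 : {set {set T}}) : bool :=
  ((#|E1| == #|E|./2) && (#|E2| == uphalf #|E|)) ||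
  ((#|E1| == uphalf #|E|) && (#|E2| == #|E|./2)).

End Graphs.

(* The randomized variant of Procedure Edge-Coloring.
   - split V E     = (E1, E2, cost) : the degree-splitting subroutine;
   - det V E       = (coloring, cost) : deterministic base-case algorithm;
   - rnd p V E w   = (coloring, cost) : randomized base-case algorithm, run on
                     the random outcome w (p = position of the call in the
                     recursion tree, so that different calls may use
                     independent parts of the randomness);
   - tau           = threshold.
   Returns (coloring, palette size, total cost). Isolated vertices are
   discarded in subgraphs (vertex set := cover of the edge set). *)
Section Procedure.
Variables (R : realType) (T : finType) (Omega : finType).
Variable split : {set T} -> {set {set T}} -> {set {set T}} * {set {set T}} * nat.
Variable det : {set T} -> {set {set T}} -> ({set T} -> nat) * nat.
Variable rnd : seq bool -> {set T} -> {set {set T}} -> Omega -> ({set T} -> nat) * nat.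
Variable tau : R.
Variable w : Omega.

Fixpoint edge_coloring (p : seq bool) (h : nat) (V : {set T}) (E : {set {set T}})
  : ({set T} -> nat) * nat * nat :=
  match h with
  | 0 =>
      let res := if tau <= #|V|%:R then rnd p V E w else det V E in
      (res.1, (maxdeg E).+1, res.2)
  | h'.+1 =>
      let: (E1, E2, cs) := split V E in
      let: (phi1, p1, c1) := edge_coloring (false :: p) h' (cover E1) E1 in
      let: (phi2, p2, c2) := edge_coloring (true :: p) h' (cover E2) E2 in
      (fun e => if e \in E1 then phi1 e else (p1 + phi2 e)%N,
       (p1 + p2)%N, (cs + c1 + c2)%N)
  end.
End Procedure.

Definition is_distr {R : realType} {Omega : finType} (P : {ffun Omega -> R}) : Prop :=
  (forall w, 0 <= P w) /\ \sum_(w : Omega) P w = 1.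

Definition Pr {R : realType} {Omega : finType} (P : {ffun Omega -> R})
  (A : pred Omega) : R := \sum_(w : Omega | A w) P w.

(* Main.v *)
Require Import Defs.
From HB Require Import structures.
From mathcomp Require Import all_boot all_order all_algebra.
From mathcomp Require Import reals exp sequences.
From mathcomp Require Import ring lra zify.
Set Implicit Arguments. Unset Strict Implicit. Unset Printing Implicit Defensive.
Import Order.TTheory GRing.Theory Num.Theory.
Local Open Scope ring_scope.

Section Comb.
Variable T : finType.
Implicit Types (F E G H : {set {set T}}).

Lemma deg_le_maxdeg F v : (deg F v <= maxdeg F)%N.
Proof. exact: leq_bigmax. Qed.

Lemma maxdeg_leP F b : (forall v, deg F v <= b)%N -> (maxdeg F <= b)%N.
Proof. by move=> H; apply/bigmax_leqP => v _; apply: H. Qed.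

Lemma maxdeg_attained F : (0 < maxdeg F)%N -> exists v, deg F v = maxdeg F.
Proof.
case: (pickP (fun _ : T => true)) => [v0 _|H].
  by exists [arg max_(i > v0) deg F i]; rewrite /maxdeg (bigop.bigmax_eq_arg v0).
by rewrite /maxdeg big_pred0.
Qed.

Lemma deg_split F G H v : G :|: H = F -> [disjoint G & H] ->
  deg F v = (deg G v + deg H v)%N.
Proof.
move=> U D; rewrite /deg -U.
have -> : [set e in G :|: H | v \in e] = [set e in G | v \in e] :|: [set e in H | v \in e].
  by apply/setP => e; rewrite !inE; case: (e \in G); case: (e \in H); case: (v \in e).
rewrite cardsU; suff -> : [set e in G | v \in e] :&: [set e in H | v \in e] = set0 by rewrite cards0 subn0.
move: D => /disjoint_setI0 /setP D; apply/setP => e; move: (D e); rewrite !inE.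
by case: (e \in G); case: (e \in H); case: (v \in e).
Qed.

Lemma card_split F G H : G :|: H = F -> [disjoint G & H] -> #|F| = (#|G| + #|H|)%N.
Proof.
move=> <- D; rewrite cardsU; move: D => /disjoint_setI0 ->; by rewrite cards0 subn0.
Qed.

Lemma cover_card_le F : (forall e, e \in F -> #|e| = 2%N) -> (#|cover F| <= 2 * #|F|)%N.
Proof.
move=> H2; rewrite /cover; apply: (leq_trans (unstable.card_big_setU _ (fun e => e \in F) _)).
rewrite (eq_bigr (fun _ => 2%N)); last by move=> e /H2.
by rewrite sum_nat_const mulnC.
Qed.

Lemma card_le_cover_maxdeg F : (forall e, e \in F -> #|e| = 2%N) ->
  (#|F| <= #|cover F| * maxdeg F)%N.
Proof.
move=> H2.
have sub : F \subset \bigcup_(v in cover F) [set e in F | v \in e].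
  apply/subsetP => e eF.
  have : (0 < #|e|)%N by rewrite H2.
  case/card_gt0P => v ve; apply/bigcupP; exists v.
    by apply/bigcupP; exists e.
  by rewrite inE eF ve.
apply: leq_trans (subset_leq_card sub) _.
apply: (leq_trans (unstable.card_big_setU _ (fun v => v \in cover F) _)).
apply: (@leq_trans (\sum_(v in cover F) maxdeg F)); first by apply: leq_sum => v _; exact: deg_le_maxdeg.
by rewrite sum_nat_const.
Qed.

Lemma deg_le_card F v : (forall e, e \in F -> #|e| = 2%N) -> (deg F v <= #|T|)%N.
Proof.
move=> H2; rewrite /deg.
set S := [set e in F | v \in e].
have inj : {in S &, injective (fun e => e :\ v)}.
  move=> e f; rewrite !inE => /andP[_ ve] /andP[_ vf] eq.
  by rewrite -(setD1K ve) -(setD1K vf) eq.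
rewrite -(card_in_imset inj).
have sub : [set e :\ v | e in S] \subset [set [set x] | x in T].
  apply/subsetP => s /imsetP [e]; rewrite inE => /andP[eF ve] ->.
  have : #|e :\ v| == 1%N.
    by have := cardsD1 v e; rewrite ve H2 // => /eqP; rewrite eqSS eq_sym.
  by case/cards1P => x ->; apply/imsetP; exists x.
apply: leq_trans (subset_leq_card sub) _.
by rewrite card_imset //; exact: set1_inj.
Qed.
End Comb.
Section Col.
Variable T : finType.
Implicit Types (F G H : {set {set T}}).

Lemma proper_col_mono F k k' phi : (k <= k')%N -> proper_col F k phi -> proper_col F k' phi.
Proof.
move=> kk /andP[/forall_inP H1 H2]; apply/andP; split=> //.
apply/forall_inP => e eF; case/andP: (H1 e eF) => -> /leq_trans; exact.
Qed.

Lemma proper_col_comb F G H p1 p2 phi1 phi2 :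
  G :|: H = F -> [disjoint G & H] ->
  proper_col G p1 phi1 -> proper_col H p2 phi2 ->
  proper_col F (p1 + p2) (fun e => if e \in G then phi1 e else (p1 + phi2 e)%N).
Proof.
move=> U D /andP[/forall_inP A1 /forall_inP B1] /andP[/forall_inP A2 /forall_inP B2].
have memF e : e \in F -> (e \in G) || (e \in H) by rewrite -U inE.
apply/andP; split.
  apply/forall_inP => e /memF /orP[eG|eH].
    by rewrite eG; case/andP: (A1 e eG) => -> le; rewrite (leq_trans le) ?leq_addr.
  have eG : e \notin G.
    by apply/negP => eG; move: D => /disjoint_setI0 /setP /(_ e); rewrite !inE eG eH.
  rewrite (negbTE eG); case/andP: (A2 e eH) => p le.
  by rewrite leq_add2l le addn_gt0 p orbT.
apply/forall_inP => e eF; apply/forall_inP => f fF; apply/implyP => /andP[nef ndis].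
have nG x : x \in H -> x \notin G.
  by move=> xH; apply/negP => xG; move: D => /disjoint_setI0 /setP /(_ x); rewrite !inE xG xH.
case/orP: (memF e eF) => [eG|eH]; case/orP: (memF f fF) => [fG|fH].
- by rewrite eG fG; move/forall_inP: (B1 e eG) => /(_ f fG); rewrite nef ndis.
- rewrite eG (negbTE (nG f fH)); case/andP: (A1 e eG) => _ le.
  by rewrite neq_ltn; apply/orP; left; rewrite (leq_ltn_trans le) // -addn1 leq_add2l; case/andP: (A2 f fH).
- rewrite fG (negbTE (nG e eH)); case/andP: (A1 f fG) => _ le.
  by rewrite neq_ltn; apply/orP; right; rewrite (leq_ltn_trans le) // -addn1 leq_add2l; case/andP: (A2 e eH).
- rewrite (negbTE (nG e eH)) (negbTE (nG f fH)) eqn_add2l.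
  by move/forall_inP: (B2 e eH) => /(_ f fH); rewrite nef ndis.
Qed.
End Col.

Section Prob.
Variables (R : realType) (Omega : finType) (P : {ffun Omega -> R}).
Hypothesis HP : is_distr P.

Lemma Pr_ge0 A : 0 <= Pr P A.
Proof. by apply: sumr_ge0 => w _; case: HP. Qed.

Lemma Pr_mono (A B : pred Omega) : (forall w, A w -> B w) -> Pr P A <= Pr P B.
Proof.
move=> AB; rewrite /Pr [X in _ <= X]big_mkcond [X in X <= _]big_mkcond /=.
apply: ler_sum => w _; case Aw: (A w); first by rewrite (AB w Aw).
by case: (B w) => //; case: HP.
Qed.

Lemma Pr_compl (A : pred Omega) : Pr P A = 1 - Pr P (predC A).
Proof.
case: HP => _ <-; rewrite /Pr (bigID A predT) /=.
rewrite addrK; apply: eq_bigl => w //.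
Qed.

Lemma Pr_union (A B : pred Omega) : Pr P (predU A B) <= Pr P A + Pr P B.
Proof.
rewrite /Pr big_mkcond [X in _ <= X + _]big_mkcond [X in _ <= _ + X]big_mkcond -big_split /=.
apply: ler_sum => w _; case: HP => H0 _; have := H0 w.
by case: (A w); case: (B w) => /=; lra.
Qed.
End Prob.
Section Inv.
Variables (T : finType) (E : {set {set T}}).
Definition invar (k : nat) (F : {set {set T}}) : bool :=
  [&& F \subset E, (#|E| <= (#|F| + 1) * 2 ^ k)%N,
      (maxdeg F * 2 ^ k + 2 <= maxdeg E + 2 * 2 ^ k)%N &
      [exists v, (maxdeg E + 2 <= deg F v * 2 ^ k + 2 * 2 ^ k)%N]].

Lemma inv_step k F F1 F2 : invar k F -> F1 :|: F2 = F -> [disjoint F1 & F2] ->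
  (forall v, (deg F1 v <= deg F2 v + 2)%N /\ (deg F2 v <= deg F1 v + 2)%N) ->
  (#|F|./2 <= #|F1|)%N -> invar k.+1 F1.
Proof.
move=> /and4P[sFE Hm Hd /existsP[v Hv]] U D Hdeg Hc.
have dsp u := deg_split u U D.
apply/and4P; split.
- by apply: subset_trans sFE; rewrite -U subsetUl.
- have := odd_double_half #|F|; rewrite -muln2 expnS.
  set t := (2 ^ k)%N; set a := #|F|./2; move=> Ho.
  have Ho2 : (#|F| <= a * 2 + 1)%N by rewrite -{1}Ho addnC leq_add2l leq_b1.
  nia.
- rewrite expnS; set t := (2 ^ k)%N.
  apply: (@leq_trans ((maxdeg F + 2) * t + 2)); last by nia.
  rewrite leq_add2r mulnA; apply: leq_mul => //.
  case: (posnP (maxdeg F1)) => [->//|/maxdeg_attained [u <-]].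
  have := deg_le_maxdeg F u; rewrite (dsp u); case: (Hdeg u) => h1 h2.
  rewrite /deg in h1 h2 *; lia.
- apply/existsP; exists v; rewrite expnS; set t := (2 ^ k)%N.
  move: Hv; rewrite (dsp v); case: (Hdeg v) => h1 h2 Hv.
  nia.
Qed.
End Inv.
Section Rec.
Variables (R : realType) (T : finType) (Omega : finType) (P : {ffun Omega -> R}).
Variable split : {set T} -> {set {set T}} -> {set {set T}} * {set {set T}} * nat.
Variable det : {set T} -> {set {set T}} -> ({set T} -> nat) * nat.
Variable rnd : seq bool -> {set T} -> {set {set T}} -> Omega -> ({set T} -> nat) * nat.
Variables (tau : R) (E : {set {set T}}) (h : nat) (A eps K1 : R).
Implicit Types F : {set {set T}}.
Hypothesis HP : is_distr P.
Hypothesis HE : simple_graph [set: T] E.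
Hypothesis HK1 : 0 <= K1.
Hypothesis Heps : 0 <= eps.
Hypothesis Hsplit : forall V F, simple_graph V F ->
       let: (F1, F2, cs) := split V F in
       [/\ degree_splitting F F1 F2 2, balanced_sizes F F1 F2
         & (cs%:R <= K1 * #|F|%:R :> R)].
Hypothesis Hleaf : forall p F, invar E h F ->
   Pr P (predC (fun w => let res := (if tau <= #|cover F|%:R then rnd p (cover F) F w
                                     else det (cover F) F) in
      proper_col F (maxdeg F).+1 res.1 && (res.2%:R <= A * #|F|%:R))) <= eps.

Definition EC w p j F := edge_coloring split det rnd tau w p j (cover F) F.
Definition good j p F w : bool :=
  let: (phi, pal, cs) := EC w p j F in
  proper_col F pal phi && (cs%:R <= K1 * #|F|%:R * j%:R + A * #|F|%:R).

Lemma E2 e : e \in E -> #|e| = 2%N.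
Proof. by move: HE => /forall_inP H /H /andP[/eqP]. Qed.

Lemma simple_sub F : F \subset E -> simple_graph (cover F) F.
Proof.
move=> sFE; apply/forall_inP => e eF; rewrite E2 ?(subsetP sFE) //=.
by apply/subsetP => x xe; apply/bigcupP; exists e.
Qed.

Lemma ECS w p j F : EC w p j.+1 F =
  let: (E1, E2, cs) := split (cover F) F in
  let: (phi1, p1, c1) := EC w (false :: p) j E1 in
  let: (phi2, p2, c2) := EC w (true :: p) j E2 in
  (fun e => if e \in E1 then phi1 e else (p1 + phi2 e)%N, (p1 + p2)%N, (cs + c1 + c2)%N).
Proof. by []. Qed.

Lemma rec j : forall k p F, (k + j = h)%N -> invar E k F ->
  (forall w, ((EC w p j F).1.2 * 2 ^ k <= maxdeg E + 3 * 2 ^ h)%N) /\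
  Pr P (predC (good j p F)) <= 2 ^+ j * eps.
Proof.
elim: j => [|j IH] k p F.
  rewrite addn0 => Hk; subst k => Hinv; split.
    move=> w; have -> : (EC w p 0 F).1.2 = (maxdeg F).+1 by [].
    case/and4P: Hinv => _ _ Hd _; rewrite mulSn; set t := (2 ^ h)%N; move: Hd; set d := maxdeg F.
    move=> Hd. lia.
  rewrite expr0 mul1r. apply: le_trans (Hleaf p Hinv).
  by apply: Pr_mono => // w; rewrite /good /EC /= mulr0 add0r.
move=> Hk Hinv.
have sFE : F \subset E by case/and4P: Hinv.
have := Hsplit (simple_sub sFE).
case Es: (split (cover F) F) => [[F1 F2] cs] [/and3P[/eqP U D /forallP Hdeg] Hbal Hcs].
have Hdeg' u : (deg F1 u <= deg F2 u + 2)%N /\ (deg F2 u <= deg F1 u + 2)%N.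
  by case/andP: (Hdeg u) => -> ->.
have Hdeg'' u : (deg F2 u <= deg F1 u + 2)%N /\ (deg F1 u <= deg F2 u + 2)%N.
  by case/andP: (Hdeg u) => -> ->.
have U' : F2 :|: F1 = F by rewrite setUC.
have D' : [disjoint F2 & F1] by rewrite disjoint_sym.
have [c1 c2] : (#|F|./2 <= #|F1|)%N /\ (#|F|./2 <= #|F2|)%N.
  by case/orP: Hbal => /andP[/eqP -> /eqP ->]; rewrite leqnn uphalf_half leq_addl.
have I1 := inv_step Hinv U D Hdeg' c1.
have I2 := inv_step Hinv U' D' Hdeg'' c2.
have Hk' : (k.+1 + j = h)%N by rewrite addSn -addnS.
have [P1 Pr1] := IH _ (false :: p) _ Hk' I1.
have [P2 Pr2] := IH _ (true :: p) _ Hk' I2.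
split.
  move=> w; rewrite ECS Es.
  move: (P1 w) (P2 w).
  case: (EC w (false :: p) j F1) => [[phi1 p1] cc1].
  case: (EC w (true :: p) j F2) => [[phi2 p2] cc2] /=.
  rewrite expnS => H1 H2; rewrite -(@leq_pmul2l 2) // mulnCA mulnDl.
  by apply: leq_trans (leq_add H1 H2) _; rewrite addnn -mul2n.
have cardF := card_split U D.
apply: (le_trans (Pr_mono HP (B := predU (predC (good j (false :: p) F1)) (predC (good j (true :: p) F2))) _)).
  move=> w; rewrite /= /good ECS Es.
  case: (EC w (false :: p) j F1) => [[phi1 p1] cc1].
  case: (EC w (true :: p) j F2) => [[phi2 p2] cc2].
  apply: contraNT; rewrite negb_or !negbK => /andP[/andP[col1 cost1] /andP[col2 cost2]].
  rewrite (proper_col_comb U D col1 col2) /=.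
  rewrite !natrD cardF natrD; rewrite cardF natrD in Hcs.
  set a := #|F1|%:R in cost1 Hcs *; set b := #|F2|%:R in cost2 Hcs *; set jj := j%:R in cost1 cost2 *.
  rewrite -[j.+1]addn1 natrD -/jj.
  nra.
apply: le_trans (Pr_union HP _ _) _.
rewrite exprS; lra.
Qed.
End Rec.
Section Leaf.
Variables (R : realType) (T : finType) (Omega : finType) (P : {ffun Omega -> R}).
Variable det : {set T} -> {set {set T}} -> ({set T} -> nat) * nat.
Variable rnd : seq bool -> {set T} -> {set {set T}} -> Omega -> ({set T} -> nat) * nat.
Variables (tau : R) (A eps K2 K3 : R) (F : {set {set T}}) (p : seq bool).
Hypothesis HP : is_distr P.
Hypothesis HS : simple_graph (cover F) F.
Hypothesis HF0 : F != set0.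
Hypothesis Hdet :
       let: (phi, cs) := det (cover F) F in
       proper_col F (maxdeg F).+1 phi /\
       (cs%:R <= K3 * #|F|%:R * (maxdeg F)%:R * log2 (#|cover F|%:R) :> R).
Hypothesis Hrnd :
       Pr P [pred w | proper_col F (maxdeg F).+1 (rnd p (cover F) F w).1 &&
                      ((rnd p (cover F) F w).2%:R <= K2 * (maxdeg F)%:R ^+ 18 * #|cover F|%:R)]
       >= 1 - (maxdeg F)%:R ^- #|cover F|.
Hypothesis HAr : tau <= #|cover F|%:R -> K2 * (maxdeg F)%:R ^+ 18 * #|cover F|%:R <= A * #|F|%:R.
Hypothesis HAd : ~~ (tau <= #|cover F|%:R) ->
   K3 * #|F|%:R * (maxdeg F)%:R * log2 (#|cover F|%:R) <= A * #|F|%:R.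
Hypothesis Heps : tau <= #|cover F|%:R -> (maxdeg F)%:R ^- #|cover F| <= eps.
Hypothesis Heps0 : 0 <= eps.

Lemma leaf_bound :
   Pr P (predC (fun w => let res := (if tau <= #|cover F|%:R then rnd p (cover F) F w
                                     else det (cover F) F) in
      proper_col F (maxdeg F).+1 res.1 && (res.2%:R <= A * #|F|%:R))) <= eps.
Proof.
case Ht: (tau <= #|cover F|%:R).
  apply: le_trans (Heps Ht).
  apply: le_trans (_ : Pr P (predC [pred w | proper_col F (maxdeg F).+1 (rnd p (cover F) F w).1 &&
                      ((rnd p (cover F) F w).2%:R <= K2 * (maxdeg F)%:R ^+ 18 * #|cover F|%:R)]) <= _).
    apply: Pr_mono => // w /=; apply: contraNN => /andP[-> /le_trans H] /=.
    exact: H (HAr Ht).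
  move: Hrnd; rewrite (Pr_compl HP [pred w | _]).
  set a := Pr P _; set dd := (_ ^- _) => H.
  by rewrite -/a; lra.
apply: le_trans Heps0.
apply: le_trans (_ : Pr P (fun _ => false) <= 0); last by rewrite /Pr big_pred0.
apply: Pr_mono => // w /=; move: Hdet (HAd (negbT Ht)).
case: (det (cover F) F) => phi cs [-> H1] H2 /=.
by rewrite (le_trans H1 H2).
Qed.
End Leaf.

Section Analytic.
Variable R : realType.

Definition Kc (c : R) : R :=
  let q := c + 1 in let mu := (ln (2:R))^-1 in
  let a := 6 * q in let b := 6 * q * (mu + mu ^+ 2) in let d := 12 * q * mu in
  2 + 3 * a * mu ^+ 2 + 3 / 2 * (2 * a + b ^+ 2 + 2 * d + 2) * mu ^+ 2.

Lemma ln2_gt0 : 0 < ln (2 : R).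
Proof. by apply: ln_gt0; rewrite ltr1n. Qed.

Lemma D18 (D : R) : 1 <= D -> D ^+ 2 <= D ^+ 18.
Proof.
move=> D1; rewrite -(mulr1 (D ^+ 2)) (_ : 18 = 2 + 16)%N // exprD.
by apply: ler_wpM2l; [apply: exprn_ge0; lra | exact: exprn_ege1].
Qed.

Lemma analytic (c : R) (n h : nat) (D : R) : 0 < c -> (2 <= n)%N -> 4 <= D ->
  let tau := (c + 1) * log2 (n%:R : R) in
  n%:R <= 2 ^+ h.+1 * (tau * (D + 2) + 1) ->
  (D + 2) * log2 tau <= Kc c * (D ^+ 18 + h%:R).
Proof.
move=> c0 n2 D4 tau Cond.
set lam := ln (2:R).
have lam0 : 0 < lam := ln2_gt0.
set mu := lam^-1.
have mu0 : 0 < mu by rewrite invr_gt0.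
have lammu : lam * mu = 1 by rewrite mulfV // gt_eqF.
have n0 : (0 : R) < n%:R by rewrite ltr0n; lia.
have lnn : lam <= ln (n%:R : R).
  by rewrite ler_ln ?posrE ?ler_nat // ltr0n.
set x := ln (n%:R : R) / lam.
have x1 : 1 <= x by rewrite /x ler_pdivlMr // mul1r.
set q := c + 1.
have taux : tau = q * x by [].
have q1 : 1 < q by rewrite /q; lra.
have tau1 : 1 < tau by rewrite taux; nra.
set l := ln tau.
have l0 : 0 < l by apply: ln_gt0.
have expl : expR l = tau by rewrite /l lnK // posrE; lra.
set L := log2 tau.
have Ll : L = l * mu by [].
have L0 : 0 < L by rewrite Ll mulr_gt0.
have D18' := D18 (_ : 1 <= D).
have h0 : (0:R) <= h%:R by [].
have mu2 : 0 <= mu ^+ 2 by apply: exprn_ge0; lra.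
set a := 6 * q. set b := 6 * q * (mu + mu ^+ 2). set d := 12 * q * mu.
have a0 : 0 <= a by rewrite /a; lra.
have C00 : 0 <= 2 * a + b ^+ 2 + 2 * d + 2.
  have : 0 <= b ^+ 2 by apply: sqr_ge0.
  have : 0 <= d by rewrite /d; apply: mulr_ge0 => //; [lra | lra].
  lra.
have K2 : 2 <= Kc c.
  rewrite /Kc -/mu -/q -/a -/b -/d.
  have : 0 <= 3 * a * mu ^+ 2 by apply: mulr_ge0 => //; lra.
  have : 0 <= 3 / 2 * (2 * a + b ^+ 2 + 2 * d + 2) * mu ^+ 2.
    by apply: mulr_ge0 => //; apply: mulr_ge0 => //; lra.
  lra.
have D18'' := D18' ltac:(lra).
case: (lerP L D) => LD.
  apply: (@le_trans _ _ (2 * D ^+ 18)).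
    apply: (@le_trans _ _ (2 * D ^+ 2)); last by lra.
    rewrite expr2; nra.
  have : 0 <= Kc c * h%:R by apply: mulr_ge0 => //; lra.
  nra.
have Cond2 : n%:R <= 2 ^+ h.+1 * (tau * (L + 3)).
  apply: (le_trans Cond); apply: ler_wpM2l; first by apply: exprn_ge0.
  nra.
have pos1 : (0:R) < 2 ^+ h.+1 by apply: exprn_gt0.
have pos2 : 0 < tau * (L + 3) by nra.
have lnC : ln (n%:R : R) <= h.+1%:R * lam + (l + ln (L + 3)).
  have pos3 : 0 < 2 ^+ h.+1 * (tau * (L + 3)) by apply: mulr_gt0.
  have H : ln (n%:R : R) <= ln (2 ^+ h.+1 * (tau * (L + 3))) by rewrite ler_ln ?posrE.
  move: H; rewrite lnM ?posrE // lnXn // lnM ?posrE ?mulr_natl //; lra.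
have lnL : ln (L + 3) <= L + 2.
  by have := @le_ln1Dx R (L + 2) ltac:(lra); rewrite (_ : 1 + (L + 2) = L + 3) //; lra.
have xb : x <= h.+1%:R + l * mu + l * mu ^+ 2 + 2 * mu.
  have : x * lam <= h.+1%:R * lam + l + l * mu + 2.
    rewrite /x -mulrA mulVf ?gt_eqF // mulr1; rewrite Ll in lnL lnC; lra.
  move=> H; have := ler_wpM2r (ltW mu0) H.
  rewrite -mulrA lammu mulr1 !mulrDl -mulrA lammu mulr1 expr2.
  rewrite !mulrA; lra.
have taub : tau <= q * h.+1%:R + q * (mu + mu ^+ 2) * l + 2 * q * mu.
  rewrite taux; have H := ler_wpM2l (ltW (lt_trans ltr01 q1)) xb.
  apply: (le_trans H); rewrite le_eqVlt; apply/orP; left; apply/eqP; ring.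
have l3 : l ^+ 3 <= a * h.+1%:R + b * l + d.
  have := @expR_ge1Dxn R l 2 (ltW l0); rewrite expl (_ : 3`!%:R = 6) //.
  rewrite /a /b /d; lra.
have l2 : l ^+ 2 <= 2 * a * h%:R + (2 * a + b ^+ 2 + 2 * d + 2).
  have e1 : l ^+ 2 <= l ^+ 3 + 1.
    case: (lerP l 1) => l1.
      have : l ^+ 2 <= 1 by rewrite expr2; nra.
      have : 0 <= l ^+ 3 by apply: exprn_ge0; lra.
      lra.
    rewrite (_ : l ^+ 3 = l ^+ 2 * l); last by rewrite exprSr.
    have : 0 <= l ^+ 2 by apply: exprn_ge0; lra.
    nra.
  have e2 : b * l <= l ^+ 2 / 2 + b ^+ 2 / 2.
    have : 0 <= (l - b) ^+ 2 by apply: sqr_ge0.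
    rewrite sqrrB expr2 expr2; lra.
  move: l3; rewrite -[h.+1]addn1 natrD; lra.
have DL : (D + 2) * L <= 3 / 2 * L ^+ 2.
  rewrite expr2; nra.
have L2 : L ^+ 2 = l ^+ 2 * mu ^+ 2 by rewrite Ll exprMn.
have fin : 3 / 2 * L ^+ 2 <= 3 * a * mu ^+ 2 * h%:R + 3 / 2 * (2 * a + b ^+ 2 + 2 * d + 2) * mu ^+ 2.
  rewrite L2; have := ler_wpM2r mu2 l2; nra.
apply: (le_trans DL); apply: (le_trans fin).
rewrite /Kc -/mu -/q -/a -/b -/d.
set C1 := 3 * a * mu ^+ 2. set C2 := 3 / 2 * (2 * a + b ^+ 2 + 2 * d + 2) * mu ^+ 2.
have C10 : 0 <= C1 by rewrite /C1; apply: mulr_ge0 => //; lra.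
have C20 : 0 <= C2 by rewrite /C2; apply: mulr_ge0 => //; apply: mulr_ge0 => //; lra.
have Dp : 1 <= D ^+ 18 by apply: exprn_ege1; lra.
nra.
Qed.
End Analytic.

Lemma Kc_ge0 (R : realType) (c : R) : 0 < c -> 0 <= Kc c.
Proof.
move=> c0; rewrite /Kc.
set q := c + 1. set mu := (ln (2:R))^-1.
have mu0 : 0 < mu by rewrite invr_gt0 ln2_gt0.
have mu2 : 0 <= mu ^+ 2 by apply: exprn_ge0; lra.
set a := 6 * q. set b := 6 * q * (mu + mu ^+ 2). set d := 12 * q * mu.
have a0 : 0 <= a by rewrite /a /q; lra.
have : 0 <= b ^+ 2 by apply: sqr_ge0.
have : 0 <= d by rewrite /d; apply: mulr_ge0 => //; rewrite /q; lra.
move=> d0 b0.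
have : 0 <= 3 * a * mu ^+ 2 by apply: mulr_ge0 => //; lra.
have : 0 <= 3 / 2 * (2 * a + b ^+ 2 + 2 * d + 2) * mu ^+ 2.
  by apply: mulr_ge0 => //; apply: mulr_ge0 => //; lra.
lra.
Qed.

Lemma aux1 d t D : (0 < t)%N -> (4 * t <= D)%N -> (D + 2 <= d * t + 2 * t)%N ->
  (d * t <= 2 * t)%N -> False.
Proof. move=> t0 H1 H2 H3; set dt := (d * t)%N in H2 H3; lia. Qed.

Theorem corollary3p10 :
  forall (R : realType) (c K1 K2 K3 : R), 0 < c ->
  exists K : R,
  forall (T : finType) (E : {set {set T}}) (Omega : finType)
         (P : {ffun Omega -> R})
         (split : {set T} -> {set {set T}} -> {set {set T}} * {set {set T}} * nat)
         (det : {set T} -> {set {set T}} -> ({set T} -> nat) * nat)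
         (rnd : seq bool -> {set T} -> {set {set T}} -> Omega -> ({set T} -> nat) * nat)
         (h : nat),
    let n := #|T| in
    let m := #|E| in
    let Delta := maxdeg E in
    let tau := (c + 1) * log2 (n%:R : R) in
    (* G = (T, E) is a simple graph without isolated vertices *)
    simple_graph [set: T] E ->
    cover E = [set: T] ->
    (* randomness: a probability distribution on a finite sample space *)
    is_distr P ->
    (* degree-splitting subroutine: discrepancy <= 2, balanced, O(|E(H)|) time *)
    (forall V F, simple_graph V F ->
       let: (F1, F2, cs) := split V F in
       [/\ degree_splitting F F1 F2 2, balanced_sizes F F1 F2
         & (cs%:R <= K1 * #|F|%:R :> R)]) ->
    (* deterministic base case: proper (Delta'+1)-coloring in O(m' Delta' log n') *)
    (forall V F, simple_graph V F -> F != set0 ->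
       let: (phi, cs) := det V F in
       proper_col F (maxdeg F).+1 phi /\
       (cs%:R <= K3 * #|F|%:R * (maxdeg F)%:R * log2 (#|V|%:R) :> R)) ->
    (* randomized base case: proper (Delta'+1)-coloring in O(Delta'^18 n')
       with probability >= 1 - Delta'^(-n') *)
    (forall p V F, simple_graph V F -> F != set0 ->
       Pr P [pred w | proper_col F (maxdeg F).+1 (rnd p V F w).1 &&
                      ((rnd p V F w).2%:R <= K2 * (maxdeg F)%:R ^+ 18 * #|V|%:R)]
       >= 1 - (maxdeg F)%:R ^- #|V|) ->
    (* range of h *)
    log2 (Delta%:R * log2 (log2 (n%:R)) / (4 * log2 (n%:R))) <= (h%:R : R) ->
    (h%:R : R) <= log2 (Delta%:R) - 2 ->
    Pr P [pred w |
      let: (phi, _, cs) := edge_coloring split det rnd tau w [::] h [set: T] E in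
      proper_col E (Delta + 3 * 2 ^ h)%N phi &&
      (cs%:R <= K * (m%:R * (Delta%:R / 2 ^+ h) ^+ 18 + m%:R * h%:R))]
    >= 1 - (powR (n%:R) c)^-1.

Proof.
move=> R c K1 K2 K3 c0.
set lam := ln (2:R).
have lam0 : 0 < lam := ln2_gt0 R.
pose Kr := 2 ^+ 19 * `|K2| + `|K3| * Kc c.
exists (`|K1| + Kr).
move=> T E Omega P split det rnd h n m Delta tau HE Hcov HP Hsplit Hdet Hrnd Hlo Hhi.
have E2' e : e \in E -> #|e| = 2%N by move: HE => /forall_inP H /H /andP[/eqP].
have Dpos : (0 < Delta)%N.
  rewrite lt0n; apply/negP => /eqP D0.
  move: Hlo Hhi; rewrite D0 !mul0r; lra.
have Hpow : (4 * 2 ^ h <= Delta)%N.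
  have H1 : h.+2%:R * lam <= ln (Delta%:R : R).
    have H : h.+2%:R <= ln (Delta%:R : R) / lam.
      by move: Hhi; rewrite /log2 -/lam -[h.+2]addn2 natrD; lra.
    by rewrite -ler_pdivlMr.
  have H2 : expR (h.+2%:R * lam) <= Delta%:R.
    by rewrite -[X in _ <= X](@lnK R) ?posrE ?ltr0n // ler_expR.
  move: H2; rewrite expRM_natl lnK ?posrE // -natrX ler_nat.
  by rewrite !expnS mulnA.
have [v0 Hv0] := maxdeg_attained Dpos.
have n2 : (2 <= n)%N.
  have : (0 < deg E v0)%N by rewrite Hv0.
  case/card_gt0P => e; rewrite inE => /andP[eE _].
  by rewrite -(E2' e eE); apply: max_card.
have DeltaN : (Delta <= n)%N by rewrite /Delta -Hv0; apply: deg_le_card.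
have nm : (n <= 2 * m)%N.
  by have := cover_card_le E2'; rewrite Hcov cardsT.
have HK1 : (0:R) <= `|K1| by [].
have Hsplit' : forall V F, simple_graph V F ->
       let: (F1, F2, cs) := split V F in
       [/\ degree_splitting F F1 F2 2, balanced_sizes F F1 F2
         & (cs%:R <= `|K1| * #|F|%:R :> R)].
  move=> V F HVF; have := Hsplit V F HVF.
  case: (split V F) => [[F1 F2] cs] [a b c']; split => //.
  apply: (le_trans c'); apply: ler_wpM2r; [exact: ler0n | exact: ler_norm].
set D : R := Delta%:R / 2 ^+ h.
have t0 : (0 : R) < 2 ^+ h by apply: exprn_gt0.
have D4 : 4 <= D.
  rewrite /D ler_pdivlMr //; have := Hpow; rewrite -(ler_nat R) natrM natrX; by [].
set Cond : bool := n%:R <= 2 ^+ h.+1 * (tau * (D + 2) + 1).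
set A : R := 2 * `|K2| * (D + 2) ^+ 18 + (if Cond then `|K3| * (D + 2) * log2 tau else 0).
set eps : R := (n%:R * powR n%:R c)^-1.
have n0 : (0 : R) < n%:R by rewrite ltr0n; apply: leq_trans n2.
have pw0 : 0 < powR (n%:R : R) c by apply: powR_gt0.
have eps0 : 0 <= eps by rewrite /eps invr_ge0; apply: mulr_ge0; lra.
have DtD : D * 2 ^+ h = Delta%:R by rewrite /D mulfVK // gt_eqF.
have Linv F : invar E h F ->
  [/\ F \subset E, (#|E| <= (#|F| + 1) * 2 ^ h)%N, (maxdeg F)%:R <= D + 2,
      (3 <= maxdeg F)%N & F != set0].
  case/and4P => sFE Hm Hd /existsP[v Hv].
  have Hd3 : (3 <= deg F v)%N.
    case: (leqP 3 (deg F v)) => // d2.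
    have t1 : (0 < 2 ^ h)%N by rewrite expn_gt0.
    have : (deg F v * 2 ^ h <= 2 * 2 ^ h)%N by apply: leq_mul.
    by move/(aux1 t1 Hpow Hv).
  split => //.
  - have H1 : (maxdeg F * 2 ^ h <= Delta + 2 * 2 ^ h)%N.
      by apply: leq_trans Hd; apply: leq_addr.
    have H2 : (maxdeg F)%:R * 2 ^+ h <= Delta%:R + 2 * 2 ^+ h :> R.
      by move: H1; rewrite -(ler_nat R) natrD !natrM natrX.
    by rewrite -(ler_pM2r t0) mulrDl DtD.
  - by apply: leq_trans Hd3 (deg_le_maxdeg F v).
  - have : (0 < deg F v)%N by apply: leq_trans Hd3.
    case/card_gt0P => e; rewrite inE => /andP[eF _].
    by apply/set0Pn; exists e.
have logn1 : 1 <= log2 (n%:R : R).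
  rewrite /log2 -/lam ler_pdivlMr // mul1r /lam ler_ln ?posrE ?ler_nat //.
have tau1 : 1 <= tau by rewrite /tau; nra.
have L0 : 0 <= log2 tau.
  by rewrite /log2 divr_ge0 ?ln_ge0 //; lra.
have A0 : 0 <= (if Cond then `|K3| * (D + 2) * log2 tau else 0).
  have : forall b : bool, 0 <= (if b then `|K3| * (D + 2) * log2 tau else 0).
    by case => //; apply: mulr_ge0 => //; apply: mulr_ge0 => //; lra.
  by apply.
have Alow : 2 * `|K2| * (D + 2) ^+ 18 <= A by rewrite /A; lra.
have D20 : 0 <= D + 2 by lra.
have Hleaf : forall p F, invar E h F ->
   Pr P (predC (fun w => let res := (if tau <= #|cover F|%:R then rnd p (cover F) F w
                                     else det (cover F) F) in
      proper_col F (maxdeg F).+1 res.1 && (res.2%:R <= A * #|F|%:R))) <= eps.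
  move=> p F HF; have [sFE Hm Hmd Hd3 HF0] := Linv F HF.
  have HS := simple_sub HE sFE.
  have E2F e : e \in F -> #|e| = 2%N by move=> eF; apply: E2' (subsetP sFE e eF).
  have nc := cover_card_le E2F.
  have mc := card_le_cover_maxdeg E2F.
  apply: leaf_bound => //.
  - exact: Hdet.
  - exact: Hrnd.
  - move=> _.
    set d := (maxdeg F)%:R; set nn := #|cover F|%:R; set mm := #|F|%:R.
    have d0 : (0:R) <= d by [].
    have nn0 : (0:R) <= nn by [].
    have dD : d ^+ 18 <= (D + 2) ^+ 18 by apply: lerXn2r; rewrite ?nnegrE.
    have nnm : nn <= 2 * mm by rewrite /nn /mm -natrM ler_nat.
    have d180 : 0 <= d ^+ 18 by apply: exprn_ge0.
    apply: (@le_trans _ _ (`|K2| * d ^+ 18 * nn)).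
      by apply: ler_wpM2r => //; apply: ler_wpM2r => //; apply: ler_norm.
    apply: (@le_trans _ _ (`|K2| * (D + 2) ^+ 18 * (2 * mm))).
      apply: ler_pM => //; first by apply: mulr_ge0.
      by apply: ler_wpM2l.
    have -> : `|K2| * (D + 2) ^+ 18 * (2 * mm) = (2 * `|K2| * (D + 2) ^+ 18) * mm by ring.
    by apply: ler_wpM2r.
  - move=> Ht; rewrite -ltNge in Ht.
    set d := (maxdeg F)%:R; set nn := #|cover F|%:R; set mm := #|F|%:R.
    have d0 : (0:R) <= d by [].
    have nn0 : (0:R) <= nn by [].
    have mm0 : (0:R) <= mm by [].
    have HC : Cond.
      rewrite /Cond.
      have r1 : (n%:R : R) <= 2 * m%:R by rewrite -natrM ler_nat.
      have r2 : (m%:R : R) <= (mm + 1) * 2 ^+ h by rewrite /mm natr1 -natrX -natrM ler_nat -addn1.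
      have r3 : mm <= nn * d by rewrite /mm /nn /d -natrM ler_nat.
      have r4 : nn * d <= tau * (D + 2) by apply: ler_pM => //; lra.
      apply: (le_trans r1); rewrite exprS -mulrA; apply: ler_wpM2l => //.
      apply: (le_trans r2); rewrite mulrC; apply: ler_wpM2l; first by apply: exprn_ge0.
      lra.
    have nn1 : 1 <= nn.
      rewrite /nn ler1n lt0n; apply/negP => /eqP n'0.
      move: mc; rewrite n'0 mul0n leqn0 cards_eq0 => /eqP F0.
      by move: HF0; rewrite F0 eqxx.
    have lg : log2 nn <= log2 tau.
      rewrite /log2 ler_pM2r ?invr_gt0 // ler_ln ?posrE; lra.
    have lg0 : 0 <= log2 nn by rewrite /log2 divr_ge0 ?ln_ge0 //; lra.
    apply: (@le_trans _ _ (`|K3| * mm * d * log2 nn)).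
      apply: ler_wpM2r => //; apply: ler_wpM2r => //; apply: ler_wpM2r => //.
      exact: ler_norm.
    apply: (@le_trans _ _ ((`|K3| * (D + 2) * log2 tau) * mm)).
      have -> : `|K3| * mm * d * log2 nn = `|K3| * mm * (d * log2 nn) by ring.
      have -> : `|K3| * (D + 2) * log2 tau * mm = `|K3| * mm * ((D + 2) * log2 tau) by ring.
      apply: ler_wpM2l; first by apply: mulr_ge0.
      by apply: ler_pM.
    apply: ler_wpM2r => //; rewrite /A HC.
    have : 0 <= 2 * `|K2| * (D + 2) ^+ 18 by apply: mulr_ge0; [apply: mulr_ge0 | apply: exprn_ge0].
    lra.
  - move=> Ht.
    have d2 : (2:R) <= (maxdeg F)%:R by rewrite ler_nat; apply: leq_trans Hd3.
    have key : n%:R * powR n%:R c <= (maxdeg F)%:R ^+ #|cover F|.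
      have e1 : n%:R * powR n%:R c = expR ((c + 1) * ln (n%:R : R)).
        rewrite /powR gt_eqF // -{1}(@lnK R n%:R) ?posrE // -expRD; congr expR; ring.
      have e2 : (c + 1) * ln (n%:R : R) = tau * lam.
        rewrite /tau /log2 -/lam; field; lra.
      rewrite e1 e2.
      apply: (@le_trans _ _ (2 ^+ #|cover F|)); last first.
        by apply: lerXn2r; rewrite ?nnegrE //; lra.
      rewrite -{1}(@lnK R 2) ?posrE // -expRM_natl ler_expR -/lam.
      by apply: ler_wpM2r => //; lra.
    have p1 : 0 < n%:R * powR n%:R c by apply: mulr_gt0.
    have p2 : 0 < (maxdeg F)%:R ^+ #|cover F| :> R by apply: exprn_gt0; lra.
    by rewrite /eps lef_pV2 ?posrE.
have inv0 : invar E 0 E.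
  apply/and4P; split => //.
  - by rewrite expn0 muln1 leq_addr.
  - by rewrite expn0 !muln1.
  - by apply/existsP; exists v0; rewrite Hv0 expn0 !muln1.
have [Hpal HPr] := rec HP HE HK1 eps0 Hsplit' Hleaf [::] (add0n h) inv0.
have Kc0 := Kc_ge0 c0.
have D0 : 0 <= D by lra.
have D18 : 0 <= D ^+ 18 by apply: exprn_ge0.
have h0 : (0:R) <= h%:R by [].
have Akey : A <= Kr * (D ^+ 18 + h%:R).
  have p1 : 2 * `|K2| * (D + 2) ^+ 18 <= 2 ^+ 19 * `|K2| * D ^+ 18.
    have : (D + 2) ^+ 18 <= (2 * D) ^+ 18 by apply: lerXn2r; rewrite ?nnegrE; lra.
    rewrite exprMn => H.
    have -> : 2 ^+ 19 * `|K2| * D ^+ 18 = 2 * `|K2| * (2 ^+ 18 * D ^+ 18).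
      by rewrite exprS; ring.
    by apply: ler_wpM2l => //; apply: mulr_ge0.
  have p2 : (if Cond then `|K3| * (D + 2) * log2 tau else 0) <= `|K3| * Kc c * (D ^+ 18 + h%:R).
    have : forall b : bool, (b -> (D + 2) * log2 tau <= Kc c * (D ^+ 18 + h%:R)) ->
       (if b then `|K3| * (D + 2) * log2 tau else 0) <= `|K3| * Kc c * (D ^+ 18 + h%:R).
      case => [H|_].
        rewrite -!mulrA; apply: ler_wpM2l => //; exact: H.
      by apply: mulr_ge0; [apply: mulr_ge0 | lra].
    apply => HC; exact: analytic c0 n2 D4 HC.
  rewrite /A /Kr.
  have : 0 <= 2 ^+ 19 * `|K2| * h%:R by apply: mulr_ge0 => //; apply: mulr_ge0 => //; apply: exprn_ge0.
  move: p1 p2; set X := (if Cond then _ else _) => p1 p2 p3.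
  have -> : (2 ^+ 19 * `|K2| + `|K3| * Kc c) * (D ^+ 18 + h%:R) =
     2 ^+ 19 * `|K2| * D ^+ 18 + 2 ^+ 19 * `|K2| * h%:R + `|K3| * Kc c * (D ^+ 18 + h%:R) by ring.
  lra.
have fin (cs : nat) : cs%:R <= `|K1| * #|E|%:R * h%:R + A * #|E|%:R ->
    cs%:R <= (`|K1| + Kr) * (m%:R * D ^+ 18 + m%:R * h%:R).
  move=> H; apply: (le_trans H).
  have m0 : (0:R) <= m%:R by [].
  have q1 := ler_wpM2r m0 Akey.
  have q2 : 0 <= `|K1| * m%:R * D ^+ 18 by apply: mulr_ge0 => //; apply: mulr_ge0.
  have -> : (`|K1| + Kr) * (m%:R * D ^+ 18 + m%:R * h%:R) =
     `|K1| * m%:R * D ^+ 18 + `|K1| * m%:R * h%:R + Kr * (D ^+ 18 + h%:R) * m%:R by ring.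
  rewrite -/m; lra.
have peps : 2 ^+ h * eps <= (powR n%:R c)^-1.
  rewrite /eps invfM mulrA -[X in _ <= X]mul1r; apply: ler_wpM2r.
    by rewrite invr_ge0; lra.
  rewrite ler_pdivrMr // mul1r -natrX ler_nat.
  apply: leq_trans DeltaN; apply: leq_trans Hpow; exact: leq_pmull.
apply: (@le_trans _ _ (Pr P (good split det rnd tau A `|K1| h [::] E))).
  rewrite (Pr_compl HP); lra.
apply: Pr_mono => // w; rewrite /good /EC /=.
move: (Hpal w); rewrite /EC Hcov.
case E0: (edge_coloring split det rnd tau w [::] h [set: T] E) => [[phi pal] cs] /=.
rewrite expn0 muln1 => Hp /andP[col cost].
apply/andP; split; first exact: proper_col_mono Hp col.
exact: fin.
Qed.
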